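(* Let $f_k:\mathbb{R}^n\to\mathbb{R}$ be convex, continuously differentiable, $L_k$-smooth and bounded below, $k=1,\dots,N$, and let $L_{\max}=\max_kL_k$. Set $\tau=\frac{2}{\mu_{\min}+L_{\max}}$ if every $f_k$ is additionally $\mu_k$-strongly convex (with $\mu_{\min}=\min_k\mu_k$), and $\tau=\frac1{L_{\max}}$ otherwise. Let $G_\theta$ be any of the parametrisations (P1)–(P4) and $\tilde\theta$ a parameter with $G_{\tilde\theta}=\tau I$. Given initial points $x_k^0$, define iterates $x_k^{t+1}=x_k^t-G_{\theta_t}\nabla f_k(x_k^t)$, where at each $t$ the parameter $\theta_t$ satisfies $g_t(\theta_t)\le g_t(\tilde\theta)$, with $g_t(\theta)=\frac1N\sum_{k=1}^N f_k(x_k^t-G_\theta\nabla f_k(x_k^t))$. Then $\nabla f_k(x_k^t)\to0$ as $t\to\infty$ for every $k\in\{1,\dots,N\}$.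
   Context: Parametrisations: (P1) $G_\alpha=\alpha I$; (P2) $G_p=\operatorname{diag}(p)$; (P3) $G_P=P\in\mathbb{R}^{n\times n}$; (P4) $G_\kappa x=\kappa\ast x$ (2D zero-padded convolution of an image $x\in\mathbb{R}^{m_1\times m_2}$, $n=m_1m_2$, with a kernel $\kappa$). A function is $L$-smooth if its gradient is $L$-Lipschitz; $\mu$-strongly convex if $f-\frac\mu2\|\cdot\|_2^2$ is convex. *)

(* Defs.v *)
From HB Require Import structures.
From mathcomp Require Import all_boot all_order all_algebra.
From mathcomp Require Import all_classical all_reals all_analysis.
Set Implicit Arguments. Unset Strict Implicit. Unset Printing Implicit Defensive.
Import Order.TTheory GRing.Theory Num.Theory.
Import numFieldNormedType.Exports.
Local Open Scope ring_scope.

Section Defs.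
Variable R : realType.

Definition dotv (n : nat) (u v : 'rV[R]_n) : R := \sum_(i < n) u 0 i * v 0 i.
Definition norm2 (n : nat) (v : 'rV[R]_n) : R := Num.sqrt (dotv v v).

Definition convex_fun (n : nat) (f : 'rV[R]_n -> R) : Prop :=
  forall (x y : 'rV[R]_n) (a : R), 0 <= a -> a <= 1 ->
    f (a *: x + (1 - a) *: y) <= a * f x + (1 - a) * f y.

Definition strongly_convex (n : nat) (mu : R) (f : 'rV[R]_n -> R) : Prop :=
  convex_fun (fun x => f x - mu / 2 * (norm2 x) ^+ 2).

Definition is_gradient (n : nat) (f : 'rV[R]_n -> R) (grad : 'rV[R]_n -> 'rV[R]_n) : Prop :=
  forall x : 'rV[R]_n, differentiable f x /\ forall v, 'd f x v = dotv (grad x) v.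

Definition lsmooth (n : nat) (L : R) (grad : 'rV[R]_n -> 'rV[R]_n) : Prop :=
  forall x y, norm2 (grad x - grad y) <= L * norm2 (x - y).

Definition bounded_below (n : nat) (f : 'rV[R]_n -> R) : Prop :=
  exists m : R, forall x, m <= f x.

(* maximum / minimum of a finite nonempty family (0 for the empty family) *)
Definition maxf (N : nat) : ('I_N -> R) -> R :=
  match N with 0 => fun _ => 0 | N'.+1 => fun u => \big[Num.max/u ord0]_(k < N'.+1) u k end.
Definition minf (N : nat) : ('I_N -> R) -> R :=
  match N with 0 => fun _ => 0 | N'.+1 => fun u => \big[Num.min/u ord0]_(k < N'.+1) u k end.

(* 2D zero-padded ("same") convolution of an image x in R^{m1 x m2} with a
   kernel of size (2 r1 + 1) x (2 r2 + 1) centred at (r1, r2):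
   (kappa * x)(i,j) = sum_{a,b} kappa(a,b) x(i + r1 - a, j + r2 - b),
   with x = 0 outside its support. *)
Definition img_at (m1 m2 : nat) (x : 'M[R]_(m1, m2)) (i j : int) : R :=
  match i, j with
  | Posz i', Posz j' =>
      (match insub i' : option 'I_m1 with
       | Some ii => match insub j' : option 'I_m2 with
                    | Some jj => x ii jj | None => 0 end
       | None => 0 end)
  | _, _ => 0
  end.

Definition conv2 (m1 m2 r1 r2 : nat) (kappa : 'M[R]_(r1.*2.+1, r2.*2.+1))
  (x : 'M[R]_(m1, m2)) : 'M[R]_(m1, m2) :=
  \matrix_(i < m1, j < m2)
    \sum_(a < r1.*2.+1) \sum_(b < r2.*2.+1)
      kappa a b * img_at x (i%:Z + r1%:Z - a%:Z) (j%:Z + r2%:Z - b%:Z).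

(* The four parametrisations (P1)-(P4) of the preconditioner G_theta on R^n *)
Inductive param (n : nat) : Type :=
  | P1 : param n
  | P2 : param n
  | P3 : param n
  | P4 : forall m1 m2 r1 r2 : nat, (m1 * m2)%N = n -> param n.

Definition ptype (n : nat) (p : param n) : Type :=
  match p with
  | P1 => R
  | P2 => 'rV[R]_n
  | P3 => 'M[R]_n
  | P4 _ _ r1 r2 _ => 'M[R]_(r1.*2.+1, r2.*2.+1)
  end.

(* action of G_theta on a vector v in R^n (row-vector convention: P v is v *m P^T) *)
Definition Gmap (n : nat) (p : param n) : ptype p -> 'rV[R]_n -> 'rV[R]_n :=
  match p as p0 return ptype p0 -> 'rV[R]_n -> 'rV[R]_n with
  | P1 => fun alpha v => alpha *: v
  | P2 => fun d v => \row_i (d 0 i * v 0 i)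
  | P3 => fun P v => v *m P^T
  | P4 m1 m2 r1 r2 e => fun kappa v =>
      castmx (erefl 1%N, e)
        (mxvec (conv2 kappa (vec_mx (castmx (erefl 1%N, esym e) v))))
  end.

End Defs.

(* Main.v *)
Require Import Defs.
From HB Require Import structures.
From mathcomp Require Import all_boot all_order all_algebra.
From mathcomp Require Import all_classical all_reals all_analysis.
From mathcomp Require Import ring lra.
Import Order.TTheory GRing.Theory Num.Theory.
Import numFieldNormedType.Exports.
Local Open Scope classical_set_scope.
Local Open Scope ring_scope.

Lemma dotv_ge0 (R : realType) n (u : 'rV[R]_n) : 0 <= dotv u u.
Proof. by apply: sumr_ge0 => i _; rewrite -expr2 sqr_ge0. Qed.

Lemma dotv_young (R : realType) n (u d : 'rV[R]_n) (c : R) : 0 < c ->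
  dotv u d <= dotv u u / (2 * c) + c / 2 * dotv d d.
Proof.
move=> c0; rewrite /dotv mulr_suml mulr_sumr -big_split /=.
apply: ler_sum => i _.
have h : 0 <= (u 0 i - c * d 0 i) ^+ 2 / (2 * c) by rewrite divr_ge0 ?sqr_ge0 // mulr_ge0 // ltW.
have -> : u 0 i * u 0 i / (2 * c) + c / 2 * (d 0 i * d 0 i) =
  (u 0 i - c * d 0 i) ^+ 2 / (2 * c) + u 0 i * d 0 i.
  by field; rewrite gt_eqF.
by rewrite lerDr.
Qed.

Lemma h_derive (R : realType) n (f : 'rV[R]_n -> R) grad x d (s : R) :
  is_gradient f grad ->
  is_derive s 1 (fun t : R => f (x + t *: d)) (dotv (grad (x + s *: d)) d).
Proof.
move=> hg; have [df dfe] := hg (x + s *: d).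
set h := (fun t : R => f (x + t *: d)).
have E : (fun t : R => t^-1 *: ((h \o shift s) (t *: 1) - h s))
   = (fun t => t^-1 *: ((f \o shift (x + s *: d)) (t *: d) - f (x + s *: d))).
  apply: funext => t /=; rewrite /h; congr (_ *: (f _ - _)).
  by rewrite [t *: 1]mulr1 scalerDl addrCA addrA.
have dv : derivable h s 1.
  rewrite /derivable E; exact: (diff_derivable (v:=d) df).
apply: DeriveDef => //.
by rewrite /derive E -/(derive f (x + s *: d) d) deriveE.
Qed.

Lemma dotvBl (R : realType) n (u v w : 'rV[R]_n) : dotv (u - v) w = dotv u w - dotv v w.
Proof.
rewrite /dotv -sumrB; apply: eq_bigr => i _; rewrite !mxE; ring.
Qed.

Lemma dotvZ (R : realType) n (c : R) (u : 'rV[R]_n) : dotv (c *: u) (c *: u) = c ^+ 2 * dotv u u.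
Proof.
rewrite /dotv mulr_sumr; apply: eq_bigr => i _; rewrite !mxE; ring.
Qed.

Lemma norm2_sqr (R : realType) n (u : 'rV[R]_n) : norm2 u ^+ 2 = dotv u u.
Proof. by rewrite /norm2 sqr_sqrtr // dotv_ge0. Qed.

Lemma norm2_ge0 (R : realType) n (u : 'rV[R]_n) : 0 <= norm2 u.
Proof. exact: sqrtr_ge0. Qed.

Lemma descent (R : realType) n (f : 'rV[R]_n -> R) grad (L : R) :
  is_gradient f grad -> lsmooth L grad -> 0 < L -> forall x d,
  f (x + d) <= f x + dotv (grad x) d + L / 2 * dotv d d.
Proof.
move=> hg hl L0 x d.
set a := dotv (grad x) d; set b := dotv d d.
pose h := (fun t : R => f (x + t *: d)).
pose phi : R -> R := (h - (a \*: (id : R -> R)) - ((L / 2 * b) \*: ((id : R -> R) * (id : R -> R))) : R -> R).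
pose dphi := fun c : R => dotv (grad (x + c *: d)) d - a *: (1:R)
   - (L / 2 * b) *: (c *: (1:R) + c *: (1:R)).
have D c : is_derive c (1:R) phi (dphi c).
  rewrite /phi /dphi; apply: is_deriveB; first apply: is_deriveB.
  + exact: h_derive.
have C : {within `[0, 1], continuous phi}.
  apply: continuous_subspaceT => c.
  apply: differentiable_continuous; apply/derivable1_diffP.
  exact: (@ex_derive _ _ _ _ _ _ _ (D c)).
have [c /andP[c0 c1] E] := MVT ltr01 (fun c _ => D c) C.
have dle : dphi c <= 0.
  rewrite /dphi.
  have c0' : 0 < c by move: c0; rewrite bnd_simp.
  set u := grad (x + c *: d) - grad x.
  have -> : dotv (grad (x + c *: d)) d - a *: (1:R) = dotv u d.
    by rewrite /u dotvBl /a [a *: 1]mulr1.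
  have Y := @dotv_young _ _ u d _ (mulr_gt0 c0' L0).
  have Hu : dotv u u <= L ^+ 2 * (c ^+ 2 * b).
    rewrite -norm2_sqr -dotvZ -norm2_sqr -exprMn.
    have := hl (x + c *: d) x; rewrite addrAC subrr add0r => hu.
    by rewrite lerXn2r // ?nnegrE ?norm2_ge0 // mulr_ge0 // ?norm2_ge0 // ltW.
  have bge : 0 <= b by exact: dotv_ge0.
  apply: (le_trans (lerB Y (lexx _))) => /=.
  rewrite subr_le0 /GRing.scale /= !mulr1.
  have Hu' : dotv u u / (2 * (c * L)) <= L ^+ 2 * (c ^+ 2 * b) / (2 * (c * L)).
    by rewrite ler_pM2r // invr_gt0 mulr_gt0 // mulr_gt0.
  apply: (le_trans (lerD Hu' (lexx _))).
  have -> : L ^+ 2 * (c ^+ 2 * b) / (2 * (c * L)) = L / 2 * b * c.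
    by field; rewrite ?gt_eqF.
  rewrite -/b.
  have -> : L / 2 * b * c + c * L / 2 * b = L / 2 * b * (c + c) by ring.
  by [].
have : phi 1 <= phi 0 by rewrite -subr_le0 E subr0 mulr1.
have e1 : phi 1 = f (x + 1 *: d) - a * 1 - L / 2 * b * (1 * 1) by [].
have e0 : phi 0 = f (x + 0 *: d) - a * 0 - L / 2 * b * (0 * 0) by [].
rewrite e1 e0 scale1r scale0r addr0 !mulr1 !mulr0 !subr0.
move=> H; lra.
Qed.

Lemma maxf_ge (R : realType) N (u : 'I_N -> R) k : u k <= maxf u.
Proof. by case: N u k => [|N] u k; [case: k | exact: le_bigmax]. Qed.

Lemma minf_gt0 (R : realType) N (u : 'I_N -> R) : (0 < N)%N -> (forall k, 0 < u k) -> 0 < minf u.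
Proof.
case: N u => [//|N] u _ hu /=.
by elim/big_ind: _ => // a b ha hb; rewrite lt_min ha hb.
Qed.

Lemma dotvZr (R : realType) n (a : R) (u v : 'rV[R]_n) : dotv u (a *: v) = a * dotv u v.
Proof. rewrite /dotv mulr_sumr; apply: eq_bigr => i _; rewrite !mxE; ring. Qed.

Lemma norm_lt_dotv (R : realType) n (v : 'rV[R]_n) (e : R) : 0 < e ->
  dotv v v < e ^+ 2 -> `|v| < e.
Proof.
move=> e0 hv; rewrite /Num.norm /= mx_normrE.
elim/big_ind: _ => // [a b ha hb|ij _]; first by rewrite gt_max ha hb.
case: ij => i j /=; rewrite (ord1 i).
rewrite -(ltr_pXn2r (n := 2)) // ?nnegrE ?normr_ge0 ?ltW //.
rewrite real_normK ?num_real //; apply: le_lt_trans hv.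
rewrite /dotv (bigD1 j) //= -expr2 lerDl; apply: sumr_ge0 => l _.
by rewrite -expr2 sqr_ge0.
Qed.

Theorem mainTheorem13 (R : realType) (n N : nat) (p : param n)
  (f : 'I_N -> 'rV[R]_n -> R) (grad : 'I_N -> 'rV[R]_n -> 'rV[R]_n)
  (L : 'I_N -> R) (strong : option ('I_N -> R))
  (thetatilde : ptype R p) (x : nat -> 'I_N -> 'rV[R]_n) (theta : nat -> ptype R p) :
  (0 < N)%N ->
  (forall k, convex_fun (f k)) ->
  (forall k, is_gradient (f k) (grad k)) ->
  (forall k, continuous (grad k)) ->
  (forall k, 0 < L k) ->
  (forall k, lsmooth (L k) (grad k)) ->
  (forall k, bounded_below (f k)) ->
  (match strong with
   | Some mu => forall k, 0 < mu k /\ strongly_convex (mu k) (f k)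
   | None => True end) ->
  let tau := match strong with
             | Some mu => 2 / (minf mu + maxf L)
             | None => 1 / maxf L end in
  (forall v, @Gmap R n p thetatilde v = tau *: v) ->
  (forall t k, x t.+1 k = x t k - @Gmap R n p (theta t) (grad k (x t k))) ->
  let g t (th : ptype R p) :=
    N%:R^-1 * \sum_(k < N) f k (x t k - @Gmap R n p th (grad k (x t k))) in
  (forall t, g t (theta t) <= g t thetatilde) ->
  forall k, (fun t => grad k (x t k)) @ \oo --> (0 : 'rV[R]_n).
Proof.
move=> N0 _ hgrad _ hL hsm hbb hstrong tau hG hx g hg k.
set Lm := maxf L.
have Lm0 : 0 < Lm := lt_le_trans (hL k) (@maxf_ge _ _ L k).
have [tau0 tauL] : 0 < tau /\ tau * Lm < 2.
  rewrite /tau; case: strong hstrong {tau hG g hg} => [mu hmu|_].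
    have m0 : 0 < minf mu by apply: minf_gt0 => // j; case: (hmu j).
    split; first by rewrite divr_gt0 // addr_gt0.
    rewrite mulrAC ltr_pdivrMr ?addr_gt0 //; rewrite -/Lm; lra.
  split; first by rewrite divr_gt0.
  by rewrite mul1r mulVf ?gt_eqF // ltr1n.
pose c := tau - Lm / 2 * tau ^+ 2.
have c0 : 0 < c.
  have -> : c = tau * (1 - tau * Lm / 2) by rewrite /c; ring.
  rewrite mulr_gt0 // subr_gt0 ltr_pdivrMr //; lra.
pose D t j := dotv (grad j (x t j)) (grad j (x t j)).
have D0 t j : 0 <= D t j by exact: dotv_ge0.
have step t j : f j (x t j - tau *: grad j (x t j)) <= f j (x t j) - c * D t j.
  have := @descent _ _ _ _ _ (hgrad j) (hsm j) (hL j) (x t j) (- (tau *: grad j (x t j))).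
  rewrite -scaleNr dotvZr dotvZ -/(D t j) => H; apply: (le_trans H).
  rewrite -subr_ge0.
  have -> : f j (x t j) - c * D t j - (f j (x t j) + - tau * D t j + L j / 2 * ((- tau) ^+ 2 * D t j))
     = (Lm - L j) / 2 * (tau ^+ 2 * D t j) by rewrite /c; ring.
  apply: mulr_ge0; [apply: mulr_ge0; [by rewrite subr_ge0 maxf_ge | by rewrite invr_ge0 ler0n] | by rewrite mulr_ge0 ?sqr_ge0].
pose F t := \sum_(j < N) f j (x t j).
have hF t : F t.+1 <= F t - c * D t k.
  have := hg t; rewrite /g ler_pM2l ?invr_gt0 ?ltr0n //.
  under eq_bigr do rewrite -hx.
  under [X in _ <= X -> _]eq_bigr do rewrite hG.
  move=> H; apply: (le_trans H); apply: (le_trans (ler_sum _ (fun j _ => step t j))).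
  rewrite sumrB lerB // -mulr_sumr ler_pM2l // (bigD1 k) //= lerDl.
  by apply: sumr_ge0.
pose m j := projT1 (cid (hbb j)).
have hm j y : m j <= f j y by rewrite /m; case: (cid (hbb j)) => /= mj; apply.
have FM t : \sum_(j < N) m j <= F t by apply: ler_sum => j _; apply: hm.
pose u t := c * D t k.
have u0 t : 0 <= u t by rewrite mulr_ge0 // ltW.
have ser T : series u T <= F 0 - F T.
  elim: T => [|T IH]; first by rewrite /series /= big_geq // subrr.
  rewrite seriesSr; have := hF T; rewrite /u; lra.
have cvu : cvgn (series u).
  apply: nondecreasing_is_cvgn.
    rewrite seriesEnat; apply: (nondecreasing_series (P := predT)) => n0 _ _; exact: u0.
  exists (F 0 - \sum_(j < N) m j) => _ [T _ <-].
  apply: (le_trans (ser T)); have := FM T; lra.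
have u_to0 := cvg_series_cvg_0 cvu.
apply/cvgr0Pnorm_lt => e e0.
move/cvgr0Pnorm_lt: u_to0 => /(_ _ (mulr_gt0 c0 (exprn_gt0 2 e0))).
apply: filterS => t Ht.
apply: norm_lt_dotv => //.
move: Ht; rewrite ger0_norm; last exact: u0. rewrite /u => H; rewrite -(ltr_pM2l c0); exact: H.
Qed.
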